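(* The Nielsen–Schreier theorem — ''for every set $A$ and every subgroup $H$ of the free group $F_A$ on $A$, there exists a subset of $H$ that freely generates $H$'' — is false in the internal logic of the topos of nominal sets.
   Context: Work in a classical metatheory. Fix a countably infinite set $\mathbb{A}$ and let $\mathrm{Perm}(\mathbb{A})$ be the group of finitely supported permutations of $\mathbb{A}$ (bijections $\pi$ with $\pi(a)=a$ for all but finitely many $a$). For a $\mathrm{Perm}(\mathbb{A})$-set $(X,\cdot)$, a subset $S\subseteq\mathbb{A}$ supports $x\in X$ if $\pi\cdot x = x$ for every $\pi$ fixing all elements of $S$. The topos of nominal sets is the full subcategory of $\mathrm{Perm}(\mathbb{A})$-sets in which every element has a finite support. Free groups are understood in the usual sense (reduced words); a subset freely generates a group if the induced homomorphism from the free group on that subset is an isomorphism. *)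

(* Defs.v *)
(* Nominal sets over the countably infinite set of atoms nat. *)
From Stdlib Require Import List Relations.
Import ListNotations.
Set Implicit Arguments.

Record finperm := FinPerm {
  fwd : nat -> nat;
  bwd : nat -> nat;
  fwd_bwd : forall a, fwd (bwd a) = a;
  bwd_fwd : forall a, bwd (fwd a) = a;
  fperm_fin : exists l : list nat, forall a, ~ In a l -> fwd a = a
}.

Definition finperm_inv (p : finperm) : finperm.
Proof.
  refine (@FinPerm (bwd p) (fwd p) (bwd_fwd p) (fwd_bwd p) _).
  destruct (fperm_fin p) as [l Hl]; exists l; intros a Ha.
  rewrite <- (Hl a Ha) at 1. apply bwd_fwd.
Defined.

Definition fixes (p : finperm) (l : list nat) : Prop :=
  forall a, In a l -> fwd p a = a.

Record nominal := Nominal {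
  carrier :> Type;
  act : finperm -> carrier -> carrier;
  act_id : forall p x, (forall a, fwd p a = a) -> act p x = x;
  act_comp : forall p q r x, (forall a, fwd r a = fwd p (fwd q a)) ->
     act r x = act p (act q x);
  act_fin_supp : forall x : carrier, exists l : list nat,
     forall p, fixes p l -> act p x = x
}.

(** Words over letters (x, b): b = true is the generator x, b = false is x^-1. *)
Definition word (L : Type) := list (L * bool).

Inductive red1 {L : Type} : word L -> word L -> Prop :=
| red1_intro : forall l1 l2 x b,
    red1 (l1 ++ (x, b) :: (x, negb b) :: l2) (l1 ++ l2).

Definition fequiv {L : Type} : word L -> word L -> Prop :=
  clos_refl_sym_trans (word L) red1.

Definition reduced {L : Type} (w : word L) : Prop :=
  forall (l1 l2 : word L) (x : L) (b : bool), w <> l1 ++ (x, b) :: (x, negb b) :: l2.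

Definition winv {L : Type} (w : word L) : word L :=
  rev (map (fun p => (fst p, negb (snd p))) w).

(** Elements of the free group F_X are the reduced words; F_X is a nominal set
    under the pointwise action on letters. *)
Definition word_act (X : nominal) (p : finperm) (w : word X) : word X :=
  map (fun l => (act X p (fst l), snd l)) w.

(** Subsets of F_X (predicates on words); action on subsets and finite support
    (internal subsets = finitely supported subsets). *)
Definition set_act (X : nominal) (p : finperm) (P : word X -> Prop) : word X -> Prop :=
  fun w => P (word_act X (finperm_inv p) w).

Definition fin_supported_set (X : nominal) (P : word X -> Prop) : Prop :=
  exists l : list nat, forall p, fixes p l -> forall w, set_act X p P w <-> P w.

Definition is_subgroup {L : Type} (H : word L -> Prop) : Prop :=
  (forall w, H w -> reduced w) /\
  H [] /\
  (forall u v w, H u -> H v -> reduced w -> fequiv (u ++ v) w -> H w) /\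
  (forall u, H u -> H (winv u)).

(** The homomorphism F_S -> F_X induced by a subset S of F_X, on words over S
    (before reduction). *)
Definition geval {L : Type} (ws : word (word L)) : word L :=
  concat (map (fun p : word L * bool => if snd p then fst p else winv (fst p)) ws).

Definition over {L : Type} (S : word L -> Prop) (ws : word (word L)) : Prop :=
  Forall (fun p : word L * bool => S (fst p)) ws.

(** S freely generates H: S ⊆ H and the induced homomorphism F_S -> H is an
    isomorphism (bijective). *)
Definition freely_generates {L : Type} (S H : word L -> Prop) : Prop :=
  (forall s, S s -> H s) /\
  (forall h, H h -> exists ws, over S ws /\ reduced ws /\ fequiv (geval ws) h) /\
  (forall ws1 ws2, over S ws1 -> over S ws2 -> reduced ws1 -> reduced ws2 ->
     fequiv (geval ws1) (geval ws2) -> ws1 = ws2).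

Definition internal_nielsen_schreier : Prop :=
  forall (A : nominal) (H : word A -> Prop),
    fin_supported_set A H -> is_subgroup H ->
    exists S : word A -> Prop,
      fin_supported_set A S /\ (forall s, S s -> H s) /\ freely_generates S H.

(* Main.v *)
Require Import Defs.
From Stdlib Require Import List Relations ZArith Lia Bool Arith.
Import ListNotations.
Open Scope Z_scope.

Definition lmap {L M : Type} (g : L -> M) (w : word L) : word M :=
  map (fun l => (g (fst l), snd l)) w.

Definition sgn (b : bool) : Z := if b then 1 else -1.

Fixpoint cnt (x : nat) (w : word nat) : Z :=
  match w with
  | [] => 0
  | (y, e) :: w' => (if Nat.eqb y x then sgn e else 0) + cnt x w'
  end.

Fixpoint FF (x y : nat) (w : word nat) : Z :=
  match w with
  | [] => 0
  | (z, e) :: w' => (if Nat.eqb z x then sgn e * cnt y w' else 0) + FF x y w'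
  end.

Lemma cnt_app x u v : cnt x (u ++ v) = cnt x u + cnt x v.
Proof. induction u as [|[z e] u IH]; simpl; [lia|]. rewrite IH; lia. Qed.

Lemma FF_app x y u v : FF x y (u ++ v) = FF x y u + FF x y v + cnt x u * cnt y v.
Proof.
  induction u as [|[z e] u IH]; simpl; [lia|]. rewrite IH, cnt_app.
  destruct (Nat.eqb z x); ring.
Qed.

Lemma red1_mid x (u v : word nat) : red1 u v -> cnt x u = cnt x v.
Proof.
  intros []. rewrite !cnt_app. simpl. destruct (Nat.eqb x0 x), b. all: cbn [sgn negb]; lia.
Qed.

Lemma red1_FF x y (u v : word nat) : x <> y -> red1 u v -> FF x y u = FF x y v.
Proof.
  intros Hxy []. rewrite !FF_app.
  assert (Hc : cnt y ((x0, b) :: (x0, negb b) :: l2) = cnt y l2)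
    by (simpl; destruct (Nat.eqb x0 y), b; cbn [sgn negb]; lia).
  rewrite Hc. f_equal. f_equal. cbn [FF cnt].
  destruct (Nat.eqb_spec x0 x), (Nat.eqb_spec x0 y); subst; try contradiction;
  destruct b; cbn [sgn negb]; ring.
Qed.

Lemma cnt_fequiv x (u v : word nat) : fequiv u v -> cnt x u = cnt x v.
Proof.
  unfold fequiv. induction 1; auto. apply red1_mid; auto. lia.
Qed.

Lemma FF_fequiv x y (u v : word nat) : x <> y -> fequiv u v -> FF x y u = FF x y v.
Proof.
  intros Hxy. unfold fequiv. induction 1; auto. apply red1_FF; auto. lia.
Qed.

Lemma winv_cons {L} (p : L * bool) w : winv (p :: w) = winv w ++ [(fst p, negb (snd p))].
Proof. reflexivity. Qed.

Lemma winv_app {L} (u v : word L) : winv (u ++ v) = winv v ++ winv u.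
Proof. unfold winv. rewrite map_app, rev_app_distr. reflexivity. Qed.

Lemma winv_invol {L} (w : word L) : winv (winv w) = w.
Proof.
  induction w as [|[z e] w IH]; [reflexivity|].
  rewrite winv_cons, winv_app, IH. cbn. rewrite negb_involutive. reflexivity.
Qed.

Lemma cnt_winv x w : cnt x (winv w) = - cnt x w.
Proof.
  induction w as [|[z e] w IH]; [reflexivity|]. rewrite winv_cons, cnt_app, IH. simpl.
  destruct (Nat.eqb z x), e; cbn [sgn negb]; lia.
Qed.

Lemma FF_winv x y w : x <> y -> FF x y (winv w) = - FF x y w + cnt x w * cnt y w.
Proof.
  intros Hxy. induction w as [|[z e] w IH]; [reflexivity|].
  rewrite winv_cons, FF_app, IH, cnt_winv. simpl.
  destruct (Nat.eqb_spec z x), (Nat.eqb_spec z y); subst; try contradiction;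
  destruct e; cbn [sgn negb]; ring.
Qed.

Lemma FF_sym x y w : x <> y -> FF x y w + FF y x w = cnt x w * cnt y w.
Proof.
  intros Hxy. induction w as [|[z e] w IH]; [reflexivity|]. simpl.
  destruct (Nat.eqb_spec z x), (Nat.eqb_spec z y); subst; try contradiction;
  destruct e; cbn [sgn negb]; nia.
Qed.

Lemma eqb_transfer (g : nat -> nat) x x' z :
  (forall z, g z = x <-> z = x') -> Nat.eqb (g z) x = Nat.eqb z x'.
Proof.
  intros H. destruct (Nat.eqb_spec (g z) x), (Nat.eqb_spec z x'); auto.
  - apply H in e. contradiction.
  - apply H in e. contradiction.
Qed.

Lemma cnt_lmap (g : nat -> nat) x x' w :
  (forall z, g z = x <-> z = x') -> cnt x (lmap g w) = cnt x' w.
Proof.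
  intros H. induction w as [|[z e] w IH]; [reflexivity|]. simpl.
  rewrite (eqb_transfer g x x' z H), IH. reflexivity.
Qed.

Lemma FF_lmap (g : nat -> nat) x x' y y' w :
  (forall z, g z = x <-> z = x') -> (forall z, g z = y <-> z = y') ->
  FF x y (lmap g w) = FF x' y' w.
Proof.
  intros H1 H2. induction w as [|[z e] w IH]; [reflexivity|]. simpl.
  rewrite (eqb_transfer g x x' z H1), IH. fold (lmap g w).
  rewrite (cnt_lmap g y y' w H2). reflexivity.
Qed.

Lemma reduced_lmap {L M} (g : L -> M) (w : word L) :
  (forall x y, g x = g y -> x = y) -> reduced w -> reduced (lmap g w).
Proof.
  intros Hinj Hr l1 l2 x e Heq. unfold lmap in Heq.
  apply map_eq_app in Heq as [w1 [w2 [-> [H1 H2]]]].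
  apply map_eq_cons in H2 as [[z1 c1] [w3 [-> [Hy1 H3]]]].
  apply map_eq_cons in H3 as [[z2 c2] [w4 [-> [Hy2 H4]]]].
  simpl in Hy1, Hy2. inversion Hy1; inversion Hy2; subst.
  assert (z1 = z2) by (apply Hinj; congruence). subst.
  apply (Hr w1 w4 z2 e). reflexivity.
Qed.

Lemma reduced_lmap_rev {L M} (g : L -> M) (w : word L) :
  reduced (lmap g w) -> reduced w.
Proof.
  intros Hr l1 l2 x e ->. apply (Hr (lmap g l1) (lmap g l2) (g x) e).
  unfold lmap. rewrite map_app. reflexivity.
Qed.

Lemma reduced_winv {L} (w : word L) : reduced w -> reduced (winv w).
Proof.
  intros Hr l1 l2 x e Heq. apply (Hr (winv l2) (winv l1) x e).
  rewrite <- (winv_invol w), Heq, winv_app, !winv_cons; cbn [fst snd].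
  rewrite negb_involutive, <- !app_assoc. reflexivity.
Qed.

Lemma fequiv_lmap {L M} (g : L -> M) (u v : word L) :
  fequiv u v -> fequiv (lmap g u) (lmap g v).
Proof.
  unfold fequiv. induction 1.
  - apply rst_step. destruct H. unfold lmap. rewrite !map_app. simpl. constructor.
  - apply rst_refl.
  - apply rst_sym; auto.
  - eapply rst_trans; eauto.
Qed.

Lemma fequiv_winv {L} (u v : word L) : fequiv u v -> fequiv (winv u) (winv v).
Proof.
  unfold fequiv. induction 1.
  - apply rst_step. destruct H. rewrite !winv_app, !winv_cons; cbn [fst snd].
    rewrite negb_involutive, <- !app_assoc. cbn [app]. constructor.
  - apply rst_refl.
  - apply rst_sym; auto.
  - eapply rst_trans; eauto.
Qed.

Lemma geval_cons {L} (p : word L * bool) ws :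
  geval (p :: ws) = (if snd p then fst p else winv (fst p)) ++ geval ws.
Proof. reflexivity. Qed.

Lemma geval_app {L} (u v : word (word L)) : geval (u ++ v) = geval u ++ geval v.
Proof. unfold geval. rewrite map_app, concat_app. reflexivity. Qed.

Lemma lmap_winv {L M} (g : L -> M) w : lmap g (winv w) = winv (lmap g w).
Proof. unfold lmap, winv. rewrite map_rev, !map_map. reflexivity. Qed.

Lemma lmap_app {L M} (g : L -> M) u v : lmap g (u ++ v) = lmap g u ++ lmap g v.
Proof. unfold lmap. apply map_app. Qed.

Lemma geval_lmap {L M} (g : L -> M) ws : geval (lmap (lmap g) ws) = lmap g (geval ws).
Proof.
  induction ws as [|[s e] ws IH]; [reflexivity|].
  change (lmap (lmap g) ((s, e) :: ws)) with ((lmap g s, e) :: lmap (lmap g) ws).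
  rewrite !geval_cons, IH, lmap_app. simpl. destruct e; [reflexivity|].
  rewrite lmap_winv. reflexivity.
Qed.

Lemma geval_winv {L} (ws : word (word L)) : geval (winv ws) = winv (geval ws).
Proof.
  induction ws as [|[s e] ws IH]; [reflexivity|].
  rewrite winv_cons, geval_app, IH, (geval_cons (s, e)), winv_app. cbn [fst snd].
  rewrite geval_cons. cbn [fst snd].
  change (geval (@nil (word L * bool))) with (@nil (L * bool)). rewrite app_nil_r.
  destruct e; cbn [negb]; [reflexivity|]. rewrite winv_invol. reflexivity.
Qed.

Definition swap (a b x : nat) : nat :=
  if Nat.eqb x a then b else if Nat.eqb x b then a else x.

Lemma swap_invol a b x : swap a b (swap a b x) = x.
Proof.
  unfold swap. destruct (Nat.eqb_spec x a); subst.
  - destruct (Nat.eqb_spec b a); subst; [reflexivity|].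
    rewrite Nat.eqb_refl. reflexivity.
  - destruct (Nat.eqb_spec x b); subst.
    + rewrite Nat.eqb_refl. reflexivity.
    + destruct (Nat.eqb_spec x a); [contradiction|].
      destruct (Nat.eqb_spec x b); [contradiction|]. reflexivity.
Qed.

Lemma swap_a a b z : a <> b -> swap a b z = a <-> z = b.
Proof.
  intros Hab. split.
  - intros H. rewrite <- (swap_invol a b z), H. unfold swap. rewrite Nat.eqb_refl. reflexivity.
  - intros ->. unfold swap. destruct (Nat.eqb_spec b a); [congruence|]. rewrite Nat.eqb_refl. reflexivity.
Qed.

Lemma swap_b a b z : a <> b -> swap a b z = b <-> z = a.
Proof.
  intros Hab. split.
  - intros H. rewrite <- (swap_invol a b z), H. unfold swap.
    destruct (Nat.eqb_spec b a); [congruence|]. rewrite Nat.eqb_refl. reflexivity.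
  - intros ->. unfold swap. rewrite Nat.eqb_refl. reflexivity.
Qed.

Lemma lmap_swap_invol a b (w : word nat) : lmap (swap a b) (lmap (swap a b) w) = w.
Proof.
  induction w as [|[z e] w IH]; [reflexivity|]. simpl. rewrite swap_invol.
  f_equal. exact IH.
Qed.

Definition swap_perm (a b : nat) : finperm.
Proof.
  refine (@FinPerm (swap a b) (swap a b) (swap_invol a b) (swap_invol a b) _).
  exists [a; b]. intros x Hx. unfold swap.
  destruct (Nat.eqb_spec x a); [subst; simpl in Hx; tauto|].
  destruct (Nat.eqb_spec x b); [subst; simpl in Hx; tauto|]. reflexivity.
Defined.

Definition Atoms : nominal.
Proof.
  refine (@Nominal nat (fun p x => fwd p x) _ _ _).
  - intros p x H; apply H.
  - intros p q r x H; apply H.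
  - intros x; exists [x]; intros p Hp; apply Hp; simpl; auto.
Defined.

Definition Hsub : word Atoms -> Prop := fun w => reduced w /\ forall x, cnt x w = 0.

Lemma Hsub_supp : fin_supported_set Atoms Hsub.
Proof.
  exists []. intros p _ w. unfold set_act.
  change (word_act Atoms (finperm_inv p) w) with (lmap (bwd p) w).
  assert (Hb : forall x z, bwd p z = x <-> z = fwd p x).
  { intros x z; split; intros H. rewrite <- H, fwd_bwd. reflexivity. subst. apply bwd_fwd. }
  unfold Hsub. split; intros [Hr Hc]; split.
  - eapply reduced_lmap_rev; eauto.
  - intros y. rewrite <- (cnt_lmap (bwd p) (bwd p y) y w). apply Hc.
    intros z. rewrite Hb, fwd_bwd. tauto.
  - apply reduced_lmap; auto. intros x y Hxy.
    rewrite <- (fwd_bwd p x), <- (fwd_bwd p y), Hxy. reflexivity.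
  - intros y. rewrite (cnt_lmap (bwd p) y (fwd p y) w). apply Hc. apply Hb.
Qed.

Lemma reduced_nil {L} : reduced (@nil (L * bool)).
Proof. intros l1 l2 x e H. destruct l1; discriminate. Qed.

Lemma Hsub_sub : is_subgroup Hsub.
Proof.
  unfold Hsub. split; [|split; [|split]].
  - intros w []; auto.
  - split; [apply reduced_nil| reflexivity].
  - intros u v w [_ Hu] [_ Hv] Hw Heq. split; auto. intros x.
    rewrite <- (cnt_fequiv x _ _ Heq), cnt_app, Hu, Hv. reflexivity.
  - intros u [Hr Hc]. split. apply reduced_winv; auto. intros x. rewrite cnt_winv, Hc. reflexivity.
Qed.

Definition ev (p : word nat * bool) : word nat := if snd p then fst p else winv (fst p).

Lemma cnt_geval (S0 : word nat -> Prop) x L :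
  (forall s, S0 s -> cnt x s = 0) -> over S0 L -> cnt x (geval L) = 0.
Proof.
  intros HS. induction L as [|[s e] L IH]; intros Ho; [reflexivity|].
  inversion Ho; subst. rewrite geval_cons, cnt_app, IH by auto. simpl in *.
  destruct e; [rewrite HS by auto; reflexivity|]. rewrite cnt_winv, HS by auto. reflexivity.
Qed.

Lemma parity a b (S0 : word nat -> Prop) (Hab : a <> b)
  (HS : forall s, S0 s -> cnt a s = 0 /\ cnt b s = 0) :
  forall n (L : word (word nat)), (length L <= n)%nat -> over S0 L ->
    lmap (lmap (swap a b)) L = winv L -> exists k, FF a b (geval L) = 2 * k.
Proof.
  assert (HA : forall s, S0 s -> cnt a s = 0) by (intros s Hs; apply HS; auto).
  assert (HB : forall s, S0 s -> cnt b s = 0) by (intros s Hs; apply HS; auto).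
  assert (Hsa : forall z, swap a b z = a <-> z = b) by (intros; apply swap_a; auto).
  assert (Hsb : forall z, swap a b z = b <-> z = a) by (intros; apply swap_b; auto).
  induction n as [|n IH]; intros L Hlen Ho Heq.
  - destruct L; [exists 0; reflexivity| simpl in Hlen; lia].
  - destruct L as [|p L1]; [exists 0; reflexivity|].
    destruct L1 as [|q0 L2].
    + destruct p as [s e]. cbn in Heq. inversion Heq. destruct e; discriminate.
    + destruct (exists_last (l := q0 :: L2) ltac:(discriminate)) as [M [q HM]].
      rewrite HM in *. clear HM q0 L2.
      destruct p as [s e], q as [t f].
      rewrite winv_cons, winv_app in Heq. cbn [fst snd winv rev map app] in Heq.
      assert (Heq' : (lmap (swap a b) s, e) :: lmap (lmap (swap a b)) M ++ [(lmap (swap a b) t, f)]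
                    = (t, negb f) :: winv M ++ [(s, negb e)]).
      { rewrite <- Heq. unfold lmap. simpl. rewrite map_app. reflexivity. }
      clear Heq. injection Heq' as Hts Hef Htail. subst t.
      assert (f = negb e) by (subst e; destruct f; reflexivity). subst f.
      apply app_inj_tail in Htail as [HM _].
      unfold over in Ho. inversion Ho as [|? ? Hs HoM]; subst.
      apply Forall_app in HoM as [HoM Hoq]. inversion Hoq as [|? ? Ht _]; subst.
      simpl in Hs, Ht.
      destruct (IH M) as [k Hk].
      { simpl in Hlen. rewrite length_app in Hlen. simpl in Hlen. lia. }
      { exact HoM. }
      { exact HM. }
      rewrite geval_cons, geval_app, !FF_app, cnt_app, Hk.
      rewrite (cnt_geval S0 a M HA HoM).
      change (geval [(lmap (swap a b) s, negb e)]) with (ev (lmap (swap a b) s, negb e) ++ []).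
      rewrite app_nil_r. unfold ev. cbn [fst snd].
      assert (Hsw : FF a b (lmap (swap a b) s) = - FF a b s).
      { rewrite (FF_lmap (swap a b) a b b a s Hsa Hsb).
        pose proof (FF_sym a b s Hab). rewrite (HA s Hs), (HB s Hs) in H. lia. }
      assert (Hca : cnt a (lmap (swap a b) s) = 0) by (rewrite (cnt_lmap _ a b s Hsa); auto).
      assert (Hcb : cnt b (lmap (swap a b) s) = 0) by (rewrite (cnt_lmap _ b a s Hsb); auto).
      destruct e; cbn [snd negb].
      * rewrite FF_winv, Hsw, Hca, (HA s Hs) by auto.
        exists (k + FF a b s). ring.
      * rewrite FF_winv, Hsw, cnt_winv, (HA s Hs), (HB s Hs) by auto.
        exists (k - FF a b s). ring.
Qed.

Lemma FF_g a b : a <> b ->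
  FF a b [(a, true); (b, true); (a, false); (b, false)] = 1.
Proof.
  intros Hab. assert (E : Nat.eqb b a = false) by (apply Nat.eqb_neq; auto).
  assert (E' : Nat.eqb a b = false) by (apply Nat.eqb_neq; auto).
  cbn [FF cnt]. rewrite !Nat.eqb_refl, E, E'. cbn [sgn]. reflexivity.
Qed.

Lemma cnt_g a b x : cnt x [(a, true); (b, true); (a, false); (b, false)] = 0.
Proof. cbn [cnt]. destruct (Nat.eqb a x), (Nat.eqb b x); cbn [sgn]; reflexivity. Qed.

Lemma reduced_g (a b : nat) : a <> b -> reduced [(a, true); (b, true); (a, false); (b, false)].
Proof.
  intros Hab l1 l2 x e H.
  destruct l1 as [|p1 [|p2 [|p3 [|p4 l1]]]]; cbn in H; inversion H; subst; try congruence.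
  destruct l1; discriminate.
Qed.

Theorem theorem6p3 : ~ internal_nielsen_schreier.
Proof.
  intros NS. destruct (NS Atoms Hsub Hsub_supp Hsub_sub) as [S0 [[l Hl] [HSH [_ [Hsurj Hinj]]]]].
  set (m := list_max l). set (a := (m + 1)%nat). set (b := (m + 2)%nat).
  assert (Hab : a <> b) by (unfold a, b; lia).
  assert (HS : forall s, S0 s -> cnt a s = 0 /\ cnt b s = 0).
  { intros s Hs. destruct (HSH s Hs) as [_ Hc]. auto. }
  set (g := [(a, true); (b, true); (a, false); (b, false)] : word Atoms).
  assert (Hg : Hsub g) by (split; [apply reduced_g; auto| intros x; apply cnt_g]).
  destruct (Hsurj g Hg) as [ws [Hows [Hrws Heqws]]].
  assert (HF : FF a b (geval ws) = 1).
  { rewrite (FF_fequiv a b _ _ Hab Heqws). apply FF_g; auto. }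
  assert (Hfix : fixes (swap_perm a b) l).
  { intros x Hx. assert (x <= m)%nat.
    { assert (Hm : (list_max l <= m)%nat) by (unfold m; lia).
      apply list_max_le in Hm. rewrite Forall_forall in Hm. auto. }
    cbn. unfold swap. destruct (Nat.eqb_spec x a); [unfold a in *; lia|].
    destruct (Nat.eqb_spec x b); [unfold b in *; lia|]. reflexivity. }
  assert (HSw : forall s, S0 s -> S0 (lmap (swap a b) s)).
  { intros s Hs. apply (Hl _ Hfix). unfold set_act.
    change (word_act Atoms (finperm_inv (swap_perm a b)) (lmap (swap a b) s))
      with (lmap (swap a b) (lmap (swap a b) s)).
    first [exact Hs | rewrite lmap_swap_invol; exact Hs]. }
  set (ws' := lmap (lmap (swap a b)) ws).
  assert (Ho' : over S0 ws').
  { unfold ws', over, lmap. apply Forall_map. eapply Forall_impl; [|exact Hows].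
    intros [s e] Hs. apply HSw. exact Hs. }
  assert (Ho2 : over S0 (winv ws)).
  { unfold over, winv. apply Forall_rev. apply Forall_map. eapply Forall_impl; [|exact Hows].
    intros [s e] Hs. exact Hs. }
  assert (Hr' : reduced ws').
  { apply reduced_lmap; auto. intros x y Hxy.
    rewrite <- (lmap_swap_invol a b x), <- (lmap_swap_invol a b y), Hxy. reflexivity. }
  assert (Hr2 : reduced (winv ws)) by (apply reduced_winv; auto).
  assert (Hfe : fequiv (geval ws') (geval (winv ws))).
  { unfold ws'. rewrite geval_lmap, geval_winv.
    eapply rst_trans. apply fequiv_lmap. exact Heqws.
    assert (E : lmap (swap a b) g = winv g).
    { unfold g, lmap, winv. cbn. unfold swap. rewrite Nat.eqb_refl.
      assert (E : Nat.eqb b a = false) by (apply Nat.eqb_neq; auto).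
      rewrite E, Nat.eqb_refl. reflexivity. }
    rewrite E. apply fequiv_winv. apply rst_sym. exact Heqws. }
  pose proof (Hinj _ _ Ho' Ho2 Hr' Hr2 Hfe) as Heq.
  destruct (parity a b S0 Hab HS (length ws) ws (le_n _) Hows Heq) as [k Hk].
  assert (H1 : 1 = 2 * k) by (rewrite <- HF; exact Hk). lia.
Qed.
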